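(* Let $\Gamma$ be a graph on $v$ vertices with adjacency matrix $A$ and Seidel matrix $S = J - I - 2A$, and suppose the switching class of $\Gamma$ is a regular two-graph, i.e. $S$ has exactly two distinct eigenvalues, written as $-1-2\sigma$ and $-1-2\tau$, with respective multiplicities $m_\sigma$ and $m_\tau$. Suppose $\Gamma$ has $e$ edges. Then the adjacency spectrum of $\Gamma$ (as a multiset) is $\{\rho_1^{(1)}, \rho_2^{(1)}, \sigma^{(m_\sigma - 1)}, \tau^{(m_\tau - 1)}\}$ for some real numbers $\rho_1,\rho_2$ (not necessarily distinct from each other or from $\sigma$ or $\tau$), and the following equations hold: $$m_\sigma + m_\tau = v,\quad m_\sigma\sigma + m_\tau\tau = -v/2,\quad m_\sigma\sigma^2 + m_\tau\tau^2 = v^2/4,$$ $$\rho_1+\rho_2 = \sigma+\tau+v/2 = -2\sigma\tau,\qquad \rho_1^2+\rho_2^2 = \sigma^2+\tau^2+2e - v^2/4.$$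
   Context: Graphs are finite, simple and undirected; $J$ is the all-ones matrix and $I$ the identity matrix of order $v$; the exponent $(m)$ denotes multiplicity. For a graph $\Gamma$ with vertex set $V$ and a partition $\Pi=\{U,W\}$ of $V$ (one part possibly empty), Seidel switching gives the graph $\Gamma^\Pi$ on $V$ in which two distinct vertices are adjacent iff either they are adjacent in $\Gamma$ and lie in the same part, or they are non-adjacent in $\Gamma$ and lie in different parts. The switching class (two-graph) $[\Gamma]$ is the set of all $\Gamma^\Pi$. The two-graph $[\Gamma]$ is called regular if the Seidel matrix $S(\Gamma)=J-I-2A$ has exactly two distinct eigenvalues (this is independent of the chosen graph in the class). *)

(* Defs.v *)
From HB Require Import structures.
From mathcomp Require Import all_boot all_order all_algebra.
Set Implicit Arguments. Unset Strict Implicit. Unset Printing Implicit Defensive.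
Import Order.TTheory GRing.Theory Num.Theory.
Local Open Scope ring_scope.

Definition simple_graph (v : nat) (adj : rel 'I_v) : Prop :=
  symmetric adj /\ irreflexive adj.

Definition adj_mx (R : nzRingType) (v : nat) (adj : rel 'I_v) : 'M[R]_v :=
  \matrix_(i, j) (adj i j)%:R.

Definition seidel_mx (R : nzRingType) (v : nat) (adj : rel 'I_v) : 'M[R]_v :=
  const_mx 1 - 1%:M - 2%:R *: adj_mx R adj.

Definition n_edges (v : nat) (adj : rel 'I_v) : nat :=
  #|[set p : 'I_v * 'I_v | (p.1 < p.2)%N && adj p.1 p.2]|.

(* Main.v *)
Require Import Defs.
From HB Require Import structures.
From mathcomp Require Import all_boot all_order all_algebra.
From mathcomp Require Import ring lra zify.
Set Implicit Arguments. Unset Strict Implicit. Unset Printing Implicit Defensive.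
Import Order.TTheory GRing.Theory Num.Theory.
Local Open Scope ring_scope.


Lemma det_rank1 (R : comNzRingType) n (c : 'cV[R]_n) (r : 'rV[R]_n) :
  \det (1%:M - c *m r) = 1 - (r *m c) 0 0.
Proof.
have E1 : block_mx 1%:M c r 1%:M =
   block_mx 1%:M 0 r 1%:M *m block_mx 1%:M c 0 (1%:M - r *m c).
  by rewrite mulmx_block ?mul1mx ?mul0mx ?mulmx0 ?mulmx1 ?addr0 ?add0r addrC subrK.
have E2 : block_mx 1%:M c r 1%:M =
   block_mx (1%:M - c *m r) c 0 1%:M *m block_mx 1%:M 0 r 1%:M.
  by rewrite mulmx_block ?mul1mx ?mul0mx ?mulmx0 ?mulmx1 ?addr0 ?add0r subrK.
have := congr1 (@determinant _ _) E1; rewrite E2 !det_mulmx det_lblock det_ublock !det1 !mulr1 !mul1r det_ublock det1 mul1r => ->.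
by rewrite det_mx11 !mxE.
Qed.

Lemma sym_sq0 (R : realDomainType) n (B : 'M[R]_n) : B^T = B -> B *m B = 0 -> B = 0.
Proof.
move=> sB BB; apply/matrixP => i j; rewrite mxE.
have := congr1 (fun M : 'M[R]_n => M i i) BB; rewrite !mxE => /eqP.
rewrite psumr_eq0 => [/allP H|k _].
  by have := H j (mem_index_enum _); rewrite -{2}sB mxE /= mulf_eq0 orbb => /eqP.
by rewrite -{2}sB mxE -expr2 sqr_ge0.
Qed.

Lemma sym_exp (R : comNzRingType) n (B : 'M[R]_n.+1) m : B^T = B -> (B ^+ m)^T = B ^+ m.
Proof.
move=> sB; elim: m => [|m IH]; first by rewrite expr0 tr_scalar_mx.
by rewrite exprS -mulmxE trmx_mul IH sB mulmxE -exprSr exprS.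
Qed.

Lemma sym_pow0 (R : realDomainType) n (B : 'M[R]_n.+1) m : B^T = B -> B ^+ m.+1 = 0 -> B = 0.
Proof.
move=> sB; elim/ltn_ind: m => m IH Bm.
case: m IH Bm => [|m] IH Bm; first by rewrite expr1 in Bm.
have h : (B ^+ (m.+1)./2.+1) = 0.
  apply: sym_sq0; first exact: sym_exp.
  rewrite mulmxE -exprD.
  have -> : ((m.+1)./2.+1 + (m.+1)./2.+1 = m.+2 + (1 - odd m.+1))%N.
    by have := odd_double_half m.+1; lia.
  by rewrite exprD Bm mul0r.
apply: (IH (m.+1)./2) => //.
have := odd_double_half m.+1; lia.
Qed.

Lemma poly_eq_large (R : realDomainType) (p q : {poly R}) (M : R) :
  (forall x, M < x -> p.[x] = q.[x]) -> p = q.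
Proof.
move=> H; apply/eqP; rewrite -subr_eq0; apply/eqP.
apply: (@roots_geq_poly_eq0 _ _ [seq M + (i.+1)%:R | i <- iota 0 (size (p - q))]).
- apply/allP => y /mapP [i _ ->]; rewrite /root hornerD hornerN H ?subrr //.
  by rewrite ltrDl ltr0n.
- rewrite map_inj_uniq ?iota_uniq // => i j /addrI /eqP.
  by rewrite eqr_nat eqSS => /eqP.
- by rewrite size_map size_iota.
Qed.

Lemma prod2_seq (R : comNzRingType) (a b : R) m k :
  ('X - a%:P) ^+ m * ('X - b%:P) ^+ k = \prod_(x <- nseq m a ++ nseq k b) ('X - x%:P).
Proof. by rewrite big_cat !big_nseq !iter_mulr_1. Qed.

Lemma coef_prod2 (R : comNzRingType) (a b : R) m k : (0 < m + k)%N ->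
  (('X - a%:P) ^+ m * ('X - b%:P) ^+ k)`_(m + k).-1 = - (m%:R * a + k%:R * b).
Proof.
move=> mk; rewrite prod2_seq.
have -> : (m + k = size (nseq m a ++ nseq k b))%N by rewrite size_cat !size_nseq.
rewrite coefPn_prod_XsubC; last by rewrite size_cat !size_nseq -lt0n.
by rewrite big_cat !big_nseq !iter_addr_0 !mulr_natl.
Qed.

Lemma size_prod2 (R : idomainType) (a b : R) m k :
  size (('X - a%:P) ^+ m * ('X - b%:P) ^+ k) = (m + k).+1.
Proof. by rewrite prod2_seq size_prod_XsubC size_cat !size_nseq. Qed.


Lemma horner_mx_sym (R : comNzRingType) k (S : 'M[R]_k.+1) p :
  S^T = S -> (horner_mx S p)^T = horner_mx S p.
Proof.
move=> sS; elim/poly_ind: p => [|p c IH]; first by rewrite rmorph0 trmx0.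
rewrite rmorphD rmorphM /= horner_mx_X horner_mx_C linearD /= tr_scalar_mx.
rewrite -mulmxE trmx_mul IH sS; congr (_ + _).
by have := comm_mx_horner p (comm_mx_refl S).
Qed.

Lemma seidel_sym (R : nzRingType) n (adj : rel 'I_n) :
  symmetric adj -> (seidel_mx R adj)^T = seidel_mx R adj.
Proof.
move=> sa; apply/matrixP => i j; rewrite !mxE sa eq_sym //.
Qed.

Lemma quad_rel (R : rcfType) k (S : 'M[R]_k.+1) (t1 t2 : R) m1 m2 :
  S^T = S -> (0 < m1)%N ->
  char_poly S = ('X - t1%:P) ^+ m1 * ('X - t2%:P) ^+ m2 ->
  S * S = (t1 + t2) *: S - (t1 * t2)%:M.
Proof.
move=> sS m1p cS.
set h1 := horner_mx S ('X - t1%:P); set h2 := horner_mx S ('X - t2%:P).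
have Q0 : h1 * h2 = 0.
  have cm := comm_horner_mx2 S ('X - t1%:P) ('X - t2%:P).
  apply: (@sym_pow0 _ _ _ (m1 + m2).-1).
    by rewrite -mulmxE trmx_mul !horner_mx_sym // mulmxE cm.
  rewrite prednK; last by lia.
  rewrite exprMn_comm // /h1 /h2 -!rmorphXn /= -rmorphM /=.
  have -> : ('X - t1%:P) ^+ (m1 + m2) * ('X - t2%:P) ^+ (m1 + m2) =
     char_poly S * (('X - t1%:P) ^+ m2 * ('X - t2%:P) ^+ m1).
    by rewrite cS !exprD; ring.
  by rewrite rmorphM /= Cayley_Hamilton mul0r.
move: Q0; rewrite /h1 /h2 !rmorphB /= horner_mx_X !horner_mx_C.
rewrite mulrBl !mulrBr -!mulmxE mul_scalar_mx mul_mx_scalar -scalar_mxM => H.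
apply/eqP; rewrite -subr_eq0; apply/eqP; rewrite -[RHS]H.
rewrite scalerDl opprB opprD !addrA.
rewrite opprB -!addrA; congr (_ + _); rewrite [RHS]addrCA; congr (_ + _); exact: addrC.
Qed.

Lemma char_poly_eval (R : comNzRingType) n (S : 'M[R]_n) x :
  (char_poly S).[x] = \det (x%:M - S).
Proof.
rewrite /char_poly -horner_evalE -det_map_mx; congr (\det _).
apply/matrixP => i j; rewrite !mxE /horner_evalE.
by rewrite -[LHS]/((_ : {poly R}).[x]) hornerD hornerN hornerMn hornerX hornerC.
Qed.

Lemma quad_form1 (R : comNzRingType) n (M : 'M[R]_n) :
  ((const_mx 1 : 'rV_n) *m (M *m (const_mx 1 : 'cV_n))) 0 0 = \sum_i \sum_j M i j.
Proof.
rewrite mxE; apply: eq_bigr => i _; rewrite !mxE mul1r.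
by apply: eq_bigr => j _; rewrite !mxE mulr1.
Qed.

Lemma J_outer (R : comNzRingType) n :
  (const_mx 1 : 'M[R]_n) = (const_mx 1 : 'cV_n) *m (const_mx 1 : 'rV_n).
Proof. by apply/matrixP => i j; rewrite !mxE big_ord1 !mxE mulr1. Qed.

Lemma det_MJ (R : fieldType) n (S : 'M[R]_n) t1 t2 m1 m2 t :
  S *m S = (t1 + t2) *: S - (t1 * t2)%:M ->
  char_poly S = ('X - t1%:P) ^+ m1 * ('X - t2%:P) ^+ m2 ->
  n = (m1 + m2)%N ->
  (t + t1) * (t + t2) != 0 ->
  \det (t%:M + S - const_mx 1) * ((t + t1) * (t + t2)) =
  (t + t1) ^+ m1 * (t + t2) ^+ m2 *
  ((t + t1) * (t + t2) - (t + t1 + t2) * n%:R + \sum_i \sum_j S i j).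
Proof.
move=> SS cS nE dn0.
have [h1 h2] : t + t1 != 0 /\ t + t2 != 0 by move: dn0; rewrite mulf_eq0 negb_or => /andP.
set d := (t + t1) * (t + t2).
set a := (t + t1 + t2) / d; set b := - d^-1.
set Minv := a%:M + b *: S.
have hM : (t%:M + S) *m Minv = 1%:M.
  rewrite /Minv mulmxDl mul_scalar_mx mulmxDr mul_mx_scalar -scalemxAr SS.
  apply/matrixP => i j; rewrite !mxE.
  rewrite /a /b /d; clear Minv a b; clear d.
  by case: (i == j); rewrite ?mulr1n ?mulr0n; field; rewrite h1 h2.
have hJ : t%:M + S - const_mx 1 = (t%:M + S) *m (1%:M - (Minv *m const_mx 1) *m (const_mx 1 : 'rV_n)).
  by rewrite mulmxBr mulmx1 !mulmxA hM mul1mx -J_outer.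
have hsum : \sum_i \sum_j Minv i j = a * n%:R + b * \sum_i \sum_j S i j.
  rewrite (eq_bigr (fun i => a + b * \sum_j S i j)) => [|i _].
    by rewrite big_split /= sumr_const card_ord mulr_natr -mulr_sumr.
  rewrite /Minv; under eq_bigr do rewrite !mxE.
  rewrite big_split /= -mulr_sumr; congr (_ + _).
  rewrite (bigD1 i) //= eqxx mulr1n big1 ?addr0 // => j /negbTE.
  by rewrite eq_sym => ->.
have hdet : \det (t%:M + S) = (t + t1) ^+ m1 * (t + t2) ^+ m2.
  have := char_poly_eval S (- t); rewrite cS hornerM !horner_exp !hornerXsubC.
  have -> : (- t)%:M - S = - (t%:M + S) by rewrite opprD; congr (_ - _); apply/matrixP => i j; rewrite !mxE mulNrn.
  rewrite -[- (t%:M + S)]scaleN1r detZ.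
  rewrite -(opprD t t1) -(opprD t t2) (exprNn (t + t1)) (exprNn (t + t2)).
  have -> : (-1) ^+ n = (-1) ^+ m1 * (-1) ^+ m2 :> R by rewrite nE exprD.
  move=> /(congr1 (fun z => (-1) ^+ m1 * (-1) ^+ m2 * z)).
  have sg : forall k, (-1) ^+ k * (-1) ^+ k = 1 :> R.
    by move=> k; rewrite -exprMn mulrNN mulr1 expr1n.
  move=> E.
  transitivity ((-1) ^+ m1 * (-1) ^+ m1 * ((-1) ^+ m2 * (-1) ^+ m2) * \det (t%:M + S)).
    by rewrite !sg !mul1r.
  transitivity ((-1) ^+ m1 * (-1) ^+ m2 * ((-1) ^+ m1 * (-1) ^+ m2 * \det (t%:M + S))).
    by ring.
  rewrite -E.
  transitivity ((-1) ^+ m1 * (-1) ^+ m1 * ((-1) ^+ m2 * (-1) ^+ m2) * ((t + t1) ^+ m1 * (t + t2) ^+ m2)).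
    by ring.
  by rewrite !sg !mul1r.
rewrite hJ det_mulmx det_rank1 quad_form1 hsum hdet /a /b /d.
by field; rewrite h1 h2.
Qed.

Lemma seidelE (R : nzRingType) n (adj : rel 'I_n) i j :
  seidel_mx R adj i j = 1 - (i == j)%:R - 2%:R * (adj i j)%:R.
Proof. by rewrite !mxE. Qed.

Lemma card_sum (R : nzRingType) (T : finType) (P : pred T) :
  \sum_(x : T) ((P x)%:R : R) = (#|[set x | P x]|)%:R.
Proof.
rewrite cardsE -sum1_card natr_sum [RHS]big_mkcond /=; apply: eq_bigr => x _.
by rewrite unfold_in; case: (P x).
Qed.

Lemma adj_count (R : nzRingType) n (adj : rel 'I_n) :
  simple_graph adj ->
  \sum_i \sum_j ((adj i j)%:R : R) = 2%:R * (n_edges adj)%:R.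
Proof.
move=> [sa ia].
rewrite pair_bigA /=.
rewrite (eq_bigr (fun p : 'I_n * 'I_n => ((p.1 < p.2)%N && adj p.1 p.2)%:R + ((p.2 < p.1)%N && adj p.2 p.1)%:R)) => [|[i j] _] /=; last first.
  rewrite (sa j i); case: (ltngtP i j) => [_|_|/val_inj ->] /=.
  - by rewrite addr0.
  - by rewrite add0r.
  - by rewrite ia addr0.
have sw : injective (fun p : 'I_n * 'I_n => (p.2, p.1)) by move=> [a b] [c d] [-> ->].
rewrite big_split /= [X in _ + X](reindex_inj sw) /= card_sum.
by rewrite /n_edges mulr2n mulrDl mul1r.
Qed.

Lemma sum_delta (R : nzRingType) n (i : 'I_n) : \sum_j (((i == j)%:R) : R) = 1.
Proof.
rewrite (bigD1 i) //= eqxx big1 ?addr0 // => j /negbTE.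
by rewrite eq_sym => ->.
Qed.

Lemma seidel_sum (R : comNzRingType) n (adj : rel 'I_n) : simple_graph adj ->
  \sum_i \sum_j seidel_mx R adj i j = n%:R * (n%:R - 1) - 4%:R * (n_edges adj)%:R.
Proof.
move=> sg.
rewrite (eq_bigr (fun i => n%:R - 1 - 2%:R * \sum_j ((adj i j)%:R : R))) => [|i _].
  rewrite !sumrB sumr_const card_ord -mulr_sumr adj_count // sumr_const card_ord.
  by rewrite -mulr_natr; ring.
under eq_bigr do rewrite seidelE.
by rewrite !sumrB sumr_const card_ord sum_delta mulr_sumr.
Qed.

Lemma seidel_tr (R : nzRingType) n (adj : rel 'I_n) : simple_graph adj ->
  \tr (seidel_mx R adj) = 0.
Proof.
move=> [_ ia]; rewrite /mxtrace big1 // => i _.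
by rewrite seidelE eqxx ia subrr mulr0 subr0.
Qed.

Lemma seidel_sq_diag (R : comNzRingType) n (adj : rel 'I_n) i : simple_graph adj ->
  (seidel_mx R adj *m seidel_mx R adj) i i = n%:R - 1.
Proof.
move=> [sa ia]; rewrite mxE.
rewrite (eq_bigr (fun k => 1 - ((i == k)%:R : R))) => [|k _].
  by rewrite sumrB sumr_const card_ord sum_delta.
rewrite !seidelE (eq_sym k i) (sa k i).
case: (eqVneq i k) => [->|_]; first by rewrite ia subrr mulr0 subr0 mulr0.
by case: (adj i k); rewrite /= subr0 ?mulr0 ?subr0 ?mulr1 ?mulr1 ?mul1r //; ring.
Qed.

Lemma sq_shift (R : comNzRingType) k (S : 'M[R]_k.+1) a b :
  S * S = (a + b) *: S - (a * b)%:M -> (S - a%:M) * (S - a%:M) = (b - a) *: (S - a%:M).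
Proof.
move=> SS; rewrite mulrBl !mulrBr -!mulmxE mul_scalar_mx mul_mx_scalar -scalar_mxM mulmxE SS.
apply/matrixP => i j; rewrite !mxE; ring.
Qed.

Lemma gram_nonneg (R : realDomainType) n (B : 'M[R]_n) :
  0 <= \sum_i \sum_j (B^T *m B) i j.
Proof.
rewrite -quad_form1.
have -> : (const_mx 1 : 'rV[R]_n) = (const_mx 1 : 'cV_n)^T by rewrite trmx_const.
rewrite !mulmxA -trmx_mul -mulmxA mxE.
apply: sumr_ge0 => i _; rewrite !mxE -expr2; exact: sqr_ge0.
Qed.


Theorem lemma4 (R : rcfType) (v : nat) (adj : rel 'I_v)
    (sigma tau : R) (msigma mtau : nat) :
  simple_graph adj ->
  sigma != tau ->
  (0 < msigma)%N -> (0 < mtau)%N ->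
  char_poly (seidel_mx R adj) =
    ('X - (-1 - 2 * sigma)%:P) ^+ msigma * ('X - (-1 - 2 * tau)%:P) ^+ mtau ->
  exists rho1 rho2 : R,
    char_poly (adj_mx R adj) =
      ('X - rho1%:P) * ('X - rho2%:P) *
      ('X - sigma%:P) ^+ (msigma - 1) * ('X - tau%:P) ^+ (mtau - 1)
    /\ (msigma + mtau)%N = v
    /\ msigma%:R * sigma + mtau%:R * tau = - (v%:R / 2)
    /\ msigma%:R * sigma ^+ 2 + mtau%:R * tau ^+ 2 = v%:R ^+ 2 / 4
    /\ rho1 + rho2 = sigma + tau + v%:R / 2
    /\ sigma + tau + v%:R / 2 = - 2 * sigma * tau
    /\ rho1 ^+ 2 + rho2 ^+ 2 =
         sigma ^+ 2 + tau ^+ 2 + 2 * (n_edges adj)%:R - v%:R ^+ 2 / 4.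
Proof.
move=> sg sne m1p m2p.
set t1 := -1 - 2 * sigma; set t2 := -1 - 2 * tau => cS.
have vE : (msigma + mtau)%N = v.
  by have := size_char_poly (seidel_mx R adj); rewrite cS size_prod2 => [[]].
have [k vk] : exists k, v = k.+1 by exists (msigma + mtau).-1; lia.
have {}vE : (msigma + mtau)%N = k.+1 by rewrite vE.
subst v.
set S := seidel_mx R adj.
have sS : S^T = S by apply: seidel_sym; case: sg.
have SS := quad_rel sS m1p cS.
set N : R := k.+1%:R.
have hN : N = msigma%:R + mtau%:R by rewrite /N -natrD vE.
have hr : t1 * t2 = 1 - N.
  have := congr1 (fun M : 'M[R]_k.+1 => M ord0 ord0) SS.
  rewrite -mulmxE seidel_sq_diag // !mxE eqxx.
  case: sg => _ ia; rewrite ia /N mulr1n mulr0 subr0 subrr mulr0 sub0r => h.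
rewrite mulr1n in h; by rewrite -[t1 * t2]opprK -h opprB.
have htr : msigma%:R * t1 + mtau%:R * t2 = 0.
  have := char_poly_trace S (ltn0Sn k); rewrite cS seidel_tr // oppr0.
  have := coef_prod2 t1 t2 (ltn_addr mtau m1p); rewrite vE /= => ->.
  by move/eqP; rewrite oppr_eq0 => /eqP.
set s := \sum_i \sum_j S i j.
have hs : s = N * (N - 1) - 4%:R * (n_edges adj)%:R by rewrite /s seidel_sum.
have sumB : forall a : R, \sum_i \sum_j ((S - a%:M) i j) = s - a * N.
  move=> a; rewrite (eq_bigr (fun i => \sum_j S i j - a)) => [|i _].
    by rewrite sumrB sumr_const card_ord /N mulr_natr.
  rewrite (eq_bigr (fun j => S i j - a *+ (i == j))) => [|j _]; last by rewrite /S !mxE.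
  rewrite sumrB; congr (_ - _).
  rewrite (bigD1 i) //= eqxx mulr1n big1 ?addr0 // => j /negbTE.
  by rewrite eq_sym => ->.
have sumZ : forall (c : R) (B : 'M[R]_k.+1), \sum_i \sum_j ((c *: B) i j) = c * \sum_i \sum_j B i j.
  move=> c B; rewrite mulr_sumr; apply: eq_bigr => i _; rewrite mulr_sumr.
  by apply: eq_bigr => j _; rewrite mxE.
have gsq : forall a b : R, S * S = (a + b) *: S - (a * b)%:M -> 0 <= (b - a) * (s - a * N).
  move=> a b SSab; have := gram_nonneg (S - a%:M).
  have -> : (S - a%:M)^T = S - a%:M by rewrite [LHS]linearB /= tr_scalar_mx sS.
  by rewrite mulmxE (sq_shift SSab) sumZ sumB.
have g1 := gsq t1 t2 SS.
have g2 : 0 <= (t1 - t2) * (s - t2 * N).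
  by apply: gsq; rewrite (addrC t2) (mulrC t2).
set P := sigma + tau + N / 2.
set c := sigma * tau + (N + 2 * N * (sigma + tau) + s) / 4.
set D := P ^+ 2 - 4 * c.
have hD : 0 <= D.
  have i1 : 4 * D = (N + t2 - t1) ^+ 2 + 4 * (N * t1 - s) by rewrite /D /c /P /t1 /t2; field.
  have i2 : 4 * D = (N + t1 - t2) ^+ 2 + 4 * (N * t2 - s) by rewrite /D /c /P /t1 /t2; field.
  have t12 : t1 != t2.
    apply: contra sne => /eqP h; apply/eqP; rewrite /t1 /t2 in h; lra.
  case: (ltrgtP t1 t2) t12 => // h _.
  - have neg : t1 - t2 < 0 by rewrite subr_lt0.
    have : s - t2 * N <= 0 by rewrite -(nmulr_rge0 _ neg).
    move=> hh; have := sqr_ge0 (N + t1 - t2); lra.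
  - have neg : t2 - t1 < 0 by rewrite subr_lt0.
    have : s - t1 * N <= 0 by rewrite -(nmulr_rge0 _ neg).
    move=> hh; have := sqr_ge0 (N + t2 - t1); lra.
set rho1 := (P + Num.sqrt D) / 2; set rho2 := (P - Num.sqrt D) / 2.
have hsum : rho1 + rho2 = P by rewrite /rho1 /rho2; field.
have hprod : rho1 * rho2 = c.
  transitivity ((P ^+ 2 - Num.sqrt D ^+ 2) / 4); first by rewrite /rho1 /rho2; field.
  by rewrite sqr_sqrtr // /D; field.
have [m1 em1] : exists m, msigma = m.+1 by exists msigma.-1; lia.
have [m2 em2] : exists m, mtau = m.+1 by exists mtau.-1; lia.
have hchar : char_poly (adj_mx R adj) =
    ('X - rho1%:P) * ('X - rho2%:P) * ('X - sigma%:P) ^+ (msigma - 1) * ('X - tau%:P) ^+ (mtau - 1).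
  apply: (@poly_eq_large _ _ _ (`|sigma| + `|tau|)) => x hx.
  have xs : 0 < x - sigma by have := ler_norm sigma; have := normr_ge0 tau; lra.
  have xt : 0 < x - tau by have := ler_norm tau; have := normr_ge0 sigma; lra.
  set t := 2 * x + 1.
  have e1 : t + t1 = 2 * (x - sigma) by rewrite /t /t1; ring.
  have e2 : t + t2 = 2 * (x - tau) by rewrite /t /t2; ring.
  have dn0 : (t + t1) * (t + t2) != 0.
    by rewrite e1 e2 mulf_neq0 // mulf_neq0 // ?pnatr_eq0 // lt0r_neq0.
  have E := det_MJ SS cS (esym vE) dn0.
  rewrite char_poly_eval.
  have -> : x%:M - adj_mx R adj = 2^-1 *: (t%:M + S - const_mx 1).
    apply/matrixP => i j; rewrite /S /t !mxE.
    by case: (i == j); case: (adj i j); rewrite ?mulr1n ?mulr0n; field.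
  rewrite detZ.
  move: E; set Dm := \det _ => E.
  have -> : Dm = (t + t1) ^+ msigma * (t + t2) ^+ mtau *
      ((t + t1) * (t + t2) - (t + t1 + t2) * N + s) / ((t + t1) * (t + t2)).
    by rewrite -E mulfK.
  rewrite !hornerM !horner_exp !hornerXsubC.
  have hq : (x - rho1) * (x - rho2) = x ^+ 2 - P * x + c.
    by rewrite -hprod -hsum; ring.
  have ee : t + t1 + t2 = 2 * x - 1 - 2 * sigma - 2 * tau by rewrite /t /t1 /t2; ring.
  rewrite hq ee e1 e2 em1 em2 !subn1 /= -vE em1 em2.
  rewrite !exprMn !exprS exprD !exprS !exprVn /c /P.
  have h2 : (2 : R) != 0 by rewrite pnatr_eq0.
  have p1 : (2 : R) ^+ m1 != 0 by rewrite expf_neq0.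
  have p2 : (2 : R) ^+ m2 != 0 by rewrite expf_neq0.
  have q1 : x - sigma != 0 by rewrite lt0r_neq0.
  have q2 : x - tau != 0 by rewrite lt0r_neq0.
  by rewrite expr0; field; rewrite ?h2 ?p1 ?p2 ?q1 ?q2.
exists rho1, rho2; split; first exact: hchar.
split; first exact: vE.
have k2 : msigma%:R * t1 ^+ 2 + mtau%:R * t2 ^+ 2 = N * (N - 1).
  transitivity ((t1 + t2) * (msigma%:R * t1 + mtau%:R * t2) - t1 * t2 * (msigma%:R + mtau%:R)).
    by ring.
  by rewrite htr hr -hN; ring.
rewrite /t1 /t2 in htr k2 hr.
split; first by rewrite hN; lra.
split; first by rewrite hN; rewrite hN in k2; lra.
split; first exact: hsum.
split; first by rewrite /P; lra.
transitivity ((rho1 + rho2) ^+ 2 - 2 * (rho1 * rho2)); first by ring.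
by rewrite hsum hprod /P /c hs; field.
Qed.
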